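(* Let $\mathcal G=\mathfrak g_1\oplus\mathfrak g_2$ and let $f\in C^p_{\mathsf{LTS}}(\mathcal G,\mathcal G)$, $g\in C^q_{\mathsf{LTS}}(\mathcal G,\mathcal G)$ be homogeneous with bidegrees $\|f\|=l_f|k_f$ and $\|g\|=l_g|k_g$. Then $\|[f,g]_{\mathsf{LTS}}\|=(l_f+l_g)|(k_f+k_g)$.
   Context: All vector spaces are over a field of characteristic $0$. Cochains: $C^p(\mathcal G,\mathcal G)=\mathrm{Hom}(\otimes^{2p+1}\mathcal G,\mathcal G)$, arguments $(\mathfrak X_1,\dots,\mathfrak X_p,x)$, $\mathfrak X_i=x_i\otimes y_i$; for $P\in C^p,Q\in C^q$, $(P\circ Q)(\mathfrak X_1,\dots,\mathfrak X_{p+q},x)=\sum_{k=1}^p(-1)^{(k-1)q}\sum_{\sigma\in\mathbb S(k-1,q)}(-1)^\sigma P(\mathfrak X_{\sigma(1)},\dots,\mathfrak X_{\sigma(k-1)},Q(\mathfrak X_{\sigma(k)},\dots,\mathfrak X_{\sigma(k+q-1)},x_{k+q})\otimes y_{k+q},\mathfrak X_{k+q+1},\dots,x)+\sum_{k=1}^p(-1)^{(k-1)q}\sum_{\sigma\in\mathbb S(k-1,q)}(-1)^\sigma P(\mathfrak X_{\sigma(1)},\dots,\mathfrak X_{\sigma(k-1)},x_{k+q}\otimes Q(\mathfrak X_{\sigma(k)},\dots,\mathfrak X_{\sigma(k+q-1)},y_{k+q}),\mathfrak X_{k+q+1},\dots,x)+\sum_{\sigma\in\mathbb S(p,q)}(-1)^\sigma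 P(\mathfrak X_{\sigma(1)},\dots,\mathfrak X_{\sigma(p)},Q(\mathfrak X_{\sigma(p+1)},\dots,\mathfrak X_{\sigma(p+q)},x))$ ($\mathbb S$ = shuffles), $[P,Q]=P\circ Q-(-1)^{pq}Q\circ P$; $C^p_{\mathsf{LTS}}$ is the subspace of $P$ with $P(\dots,x,x,y)=0$ and vanishing cyclic sum in the last three slots, with restricted bracket $[\cdot,\cdot]_{\mathsf{LTS}}$. Bidegree: $\mathfrak g^{a,b}\subset\otimes^{a+b}\mathcal G$ is the sum of all tensor products with exactly $a$ factors $\mathfrak g_1$ and $b$ factors $\mathfrak g_2$; $f\in C^p_{\mathsf{LTS}}$ has bidegree $l|k$ ($l+k=2p$) if $f(\mathfrak g^{l+1,k})\subset\mathfrak g_1$, $f(\mathfrak g^{l,k+1})\subset\mathfrak g_2$, and $f$ vanishes on all other $\mathfrak g^{a,b}$; homogeneous means having a bidegree. *)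

(* Defs.v *)
From HB Require Import structures.
From mathcomp Require Import all_boot all_order all_algebra.
Set Implicit Arguments. Unset Strict Implicit. Unset Printing Implicit Defensive.
Import Order.TTheory GRing.Theory Num.Theory.
Local Open Scope ring_scope.

(* The ambient space  G = g1 (+) g2  is modelled as the product  V1 * V2  of two
   K-vector spaces; g1 = {(v,0)}, g2 = {(0,w)}. *)
Section Cochains.
Variables (K : fieldType) (V1 V2 : lmodType K).
Local Notation G := (V1 * V2)%type.

Definition in_g1 (v : G) : Prop := v.2 = 0.
Definition in_g2 (v : G) : Prop := v.1 = 0.

(* A cochain: a function of the arguments (X_1,...,X_p, x), X_i = (x_i, y_i),
   given as a sequence of pairs and a last argument.  Only sequences of the
   right length are relevant. *)
Definition cochain := seq (G * G) -> G -> G.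

Definition lin_slot (f : G -> G) := forall (a : K) (u v : G), f (a *: u + v) = a *: f u + f v.

(* P is (2p+1)-multilinear, i.e. an element of Hom(⊗^{2p+1} G, G) = C^p *)
Definition multilinear (p : nat) (P : cochain) : Prop :=
  (forall s, size s = p -> lin_slot (P s)) /\
  (forall s x i, size s = p -> (i < p)%N ->
     lin_slot (fun u => P (set_nth (0,0) s i (u, (nth (0,0) s i).2)) x) /\
     lin_slot (fun u => P (set_nth (0,0) s i ((nth (0,0) s i).1, u)) x)).

Definition lts_cond (p : nat) (P : cochain) : Prop :=
  forall s x y z, (0 < p)%N -> size s = p.-1 ->
    P (rcons s (x, x)) y = 0 /\
    P (rcons s (x, y)) z + P (rcons s (y, z)) x + P (rcons s (z, x)) y = 0.

Definition is_LTS_cochain (p : nat) (P : cochain) : Prop :=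
  multilinear p P /\ lts_cond p P.

(* Shuffles in S(a,b): bit masks of length a+b with a [true]s; the trues give
   the positions sigma(1) < ... < sigma(a), the falses sigma(a+1) < ... . *)
Fixpoint masks (n : nat) : seq bitseq :=
  if n is n'.+1 then [seq b :: m | b <- [:: true; false], m <- masks n'] else [:: [::]].
Definition shuffles (a b : nat) : seq bitseq :=
  [seq m <- masks (a + b) | count id m == a].
(* number of inversions of the shuffle: for each true, the falses before it *)
Fixpoint shinv (m : bitseq) (nf : nat) : nat :=
  match m with
  | [::] => 0%N
  | true :: m' => (nf + shinv m' nf)%N
  | false :: m' => shinv m' nf.+1
  end.
Definition shsign (m : bitseq) : K := (-1) ^+ shinv m 0.

(* P ∘ Q for P in C^p, Q in C^q; k below is the paper's k-1 *)
Definition comp (p q : nat) (P Q : cochain) : cochain := fun s x =>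
  \sum_(k < p) \sum_(m <- shuffles k q)
     (((-1) ^+ (k * q) * shsign m) *:
       (let u := take (k + q) s in
        let X := nth (0,0) s (k + q) in
        let r := drop (k + q).+1 s in
        P (mask m u ++ (Q (mask (map negb m) u) X.1, X.2) :: r) x
      + P (mask m u ++ (X.1, Q (mask (map negb m) u) X.2) :: r) x))
  + \sum_(m <- shuffles p q) shsign m *: P (mask m s) (Q (mask (map negb m) s) x).

(* [P,Q] = P∘Q - (-1)^{pq} Q∘P ; on LTS cochains this is [.,.]_LTS *)
Definition bracket (p q : nat) (P Q : cochain) : cochain := fun s x =>
  comp p q P Q s x - (-1) ^+ (p * q) *: comp q p Q P s x.

(* homogeneity of an argument: colour true = g1, false = g2 *)
Definition hom_in (c : bool) (v : G) : Prop := if c then in_g1 v else in_g2 v.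

Definition has_bidegree (p : nat) (P : cochain) (l k : int) : Prop :=
  l + k = (2 * p)%:Z /\
  forall (s : seq (G * G)) (x : G) (cs : seq (bool * bool)) (cx : bool),
    size s = p -> size cs = p ->
    (forall i, (i < p)%N -> hom_in (nth (true,true) cs i).1 (nth (0,0) s i).1 /\
                           hom_in (nth (true,true) cs i).2 (nth (0,0) s i).2) ->
    hom_in cx x ->
    let a : int := ((\sum_(c <- cs) (c.1 + c.2)) + cx)%N in
    (a = l + 1 -> in_g1 (P s x)) /\
    (a = l -> in_g2 (P s x)) /\
    (a <> l + 1 -> a <> l -> P s x = 0).

End Cochains.

(* Main.v *)
Require Import Defs.
From HB Require Import structures.
From mathcomp Require Import all_boot all_order all_algebra.
From mathcomp Require Import zify.
Set Implicit Arguments. Unset Strict Implicit. Unset Printing Implicit Defensive.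
Import Order.TTheory GRing.Theory Num.Theory.
Local Open Scope ring_scope.

Section Helpers.
Variables (K : fieldType) (V1 V2 : lmodType K).
Local Notation G := (V1 * V2)%type.

Fixpoint homs (cs : seq (bool * bool)) (s : seq (G * G)) : Prop :=
  match cs, s with
  | [::], [::] => True
  | c :: cs', X :: s' => hom_in c.1 X.1 /\ hom_in c.2 X.2 /\ homs cs' s'
  | _, _ => False
  end.

Lemma homs_size cs s : homs cs s -> size cs = size s.
Proof. by elim: cs s => [|c cs IH] [|X s] //= [_ [_ /IH ->]]. Qed.

Lemma homs_nthP cs s : size cs = size s ->
  (forall i, (i < size s)%N -> hom_in (nth (true,true) cs i).1 (nth (0,0) s i).1 /\
                           hom_in (nth (true,true) cs i).2 (nth (0,0) s i).2) ->
  homs cs s.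
Proof.
elim: cs s => [|c cs IH] [|X s] //= /succn_inj Hs H.
have [H1 H2] := H 0%N isT; split => //; split => //.
by apply: IH => // i Hi; apply: (H i.+1).
Qed.

Lemma homs_nth cs s : homs cs s ->
  forall i, (i < size s)%N -> hom_in (nth (true,true) cs i).1 (nth (0,0) s i).1 /\
                           hom_in (nth (true,true) cs i).2 (nth (0,0) s i).2.
Proof.
elim: cs s => [|c cs IH] [|X s] //= [H1 [H2 H]] [|i] //= Hi.
exact: IH.
Qed.

Lemma homs_mask m cs s : homs cs s -> homs (mask m cs) (mask m s).
Proof.
elim: cs s m => [|c cs IH] [|X s] [|b m] //= [H1 [H2 H]].
by case: b => /=; [split; [|split]|]; auto.
Qed.

Lemma homs_take n cs s : homs cs s -> homs (take n cs) (take n s).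
Proof.
elim: cs s n => [|c cs IH] [|X s] [|n] //= [H1 [H2 H]]; auto.
Qed.

Lemma homs_drop n cs s : homs cs s -> homs (drop n cs) (drop n s).
Proof.
elim: cs s n => [|c cs IH] [|X s] [|n] //= [H1 [H2 H]]; auto.
Qed.

Lemma homs_cat c1 c2 s1 s2 : homs c1 s1 -> homs c2 s2 -> homs (c1 ++ c2) (s1 ++ s2).
Proof.
elim: c1 s1 => [|c cs IH] [|X s] //= [H1 [H2 H]] H'; auto.
Qed.

Definition cnt (cs : seq (bool * bool)) : nat := (\sum_(c <- cs) (c.1 + c.2))%N.

Lemma cnt_cat c1 c2 : cnt (c1 ++ c2) = (cnt c1 + cnt c2)%N.
Proof. by rewrite /cnt big_cat. Qed.

Lemma cnt_cons c cs : cnt (c :: cs) = (c.1 + c.2 + cnt cs)%N.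
Proof. by rewrite /cnt big_cons. Qed.

Lemma cnt_mask m cs : size m = size cs ->
  cnt cs = (cnt (mask m cs) + cnt (mask (map negb m) cs))%N.
Proof.
elim: cs m => [|c cs IH] [|b m] //=; first by rewrite /cnt !big_nil.
move/succn_inj => Hs.
rewrite !cnt_cons (IH m Hs); case: b => /=; rewrite ?cnt_cons; lia.
Qed.

Lemma cnt_split n cs : (n < size cs)%N ->
  cnt cs = (cnt (take n cs) + ((nth (true,true) cs n).1 + (nth (true,true) cs n).2)
            + cnt (drop n.+1 cs))%N.
Proof.
move=> Hn; rewrite -{1}(cat_take_drop n cs) (drop_nth (true,true) Hn) cnt_cat cnt_cons.
lia.
Qed.

Lemma masks_size n m : m \in masks n -> size m = n.
Proof.
elim: n m => [|n IH] m /=; first by rewrite inE => /eqP ->.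
rewrite !mem_cat in_nil orbF => /orP [] /mapP [mm Hm ->] /=; by rewrite IH.
Qed.

Lemma shuffles_prop a b m : m \in shuffles a b -> size m = (a + b)%N /\ count id m = a.
Proof.
rewrite /shuffles mem_filter => /andP [/eqP H1 H2]; split => //; exact: masks_size.
Qed.

Lemma count_negb (m : bitseq) : count id (map negb m) = (size m - count id m)%N.
Proof.
have := count_predC id m; rewrite count_map.
have -> : count (preim negb id) m = count (predC id) m by apply: eq_count.
lia.
Qed.

Definition good (L A : int) (v : G) : Prop :=
  (A = L + 1 -> in_g1 v) /\ (A = L -> in_g2 v) /\ (A <> L + 1 -> A <> L -> v = 0).

Lemma good0 L A : good L A 0.
Proof. by rewrite /good /in_g1 /in_g2. Qed.

Lemma goodD L A u v : good L A u -> good L A v -> good L A (u + v).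
Proof.
rewrite /good /in_g1 /in_g2 => [[h1 [h2 h3]] [k1 [k2 k3]]]; split; [|split].
- by move=> E; rewrite /= (h1 E) (k1 E) addr0.
- by move=> E; rewrite /= (h2 E) (k2 E) addr0.
- by move=> E1 E2; rewrite (h3 E1 E2) (k3 E1 E2) addr0.
Qed.

Lemma goodZ L A a v : good L A v -> good L A (a *: v).
Proof.
rewrite /good /in_g1 /in_g2 => [[h1 [h2 h3]]]; split; [|split].
- by move=> E; rewrite /= (h1 E) scaler0.
- by move=> E; rewrite /= (h2 E) scaler0.
- by move=> E1 E2; rewrite (h3 E1 E2) scaler0.
Qed.

Lemma goodN L A v : good L A v -> good L A (- v).
Proof. by move=> H; rewrite -scaleN1r; apply: goodZ. Qed.

Lemma good_sum_seq L A (T : eqType) (r : seq T) (F : T -> G) :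
  (forall m, m \in r -> good L A (F m)) -> good L A (\sum_(m <- r) F m).
Proof.
elim: r => [|t r IH] H; first by rewrite big_nil; apply: good0.
rewrite big_cons; apply: goodD; first by apply: H; rewrite inE eqxx.
by apply: IH => m Hm; apply: H; rewrite inE Hm orbT.
Qed.

Lemma good_sum_ord L A n (F : 'I_n -> G) :
  (forall k, good L A (F k)) -> good L A (\sum_(k < n) F k).
Proof.
move=> H; apply: (big_ind (good L A)); [exact: good0 | exact: goodD | by move=> i _; apply: H].
Qed.

Lemma good_shift L M B v : good L B v -> good (L + M) (B + M) v.
Proof.
move=> [h1 [h2 h3]]; split; [|split].
- move=> E; apply: h1; lia.
- move=> E; apply: h2; lia.
- move=> E1 E2; apply: h3; lia.
Qed.

Lemma bideg_good p P l k s x cs cx :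
  has_bidegree p P l k -> size s = p -> size cs = p -> homs cs s -> hom_in cx x ->
  good l (Posz (cnt cs + cx)%N) (P s x).
Proof.
move=> [_ H] Hs Hcs Hh Hx.
have := H s x cs cx Hs Hcs _ Hx.
move=> /(_ _)[]; first by move=> i Hi; apply: homs_nth => //; rewrite Hs.
by move=> h1 [h2 h3]; split; [|split].
Qed.

Lemma lin0 (F : G -> G) : lin_slot F -> F 0 = 0.
Proof.
move=> H; have := H 1 0 0; rewrite scaler0 addr0 scale1r => E.
have := congr1 (fun t => t - F 0) E; rewrite /= subrr addrK => E'.
by rewrite -E'.
Qed.

Lemma set_nth_cat (pre r : seq (G * G)) y z :
  set_nth (0,0) (pre ++ y :: r) (size pre) z = pre ++ z :: r.
Proof. by elim: pre => [|a pre IH] //=; rewrite IH. Qed.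

Lemma nth_cat_mid (pre r : seq (G * G)) y :
  nth (0,0) (pre ++ y :: r) (size pre) = y.
Proof. by elim: pre => [|a pre IH] //=. Qed.

Lemma ml_zero1 p P (pre r : seq (G * G)) y2 x :
  multilinear p P -> (size pre + (size r).+1 = p)%N ->
  P (pre ++ (0, y2) :: r) x = 0.
Proof.
move=> [_ H] Hs.
have Hsz : size (pre ++ (0, y2) :: r) = p by rewrite size_cat /=.
have [H1 _] := H _ x (size pre) Hsz ltac:(lia).
have := lin0 H1; by rewrite nth_cat_mid set_nth_cat.
Qed.

Lemma ml_zero2 p P (pre r : seq (G * G)) y1 x :
  multilinear p P -> (size pre + (size r).+1 = p)%N ->
  P (pre ++ (y1, 0) :: r) x = 0.
Proof.
move=> [_ H] Hs.
have Hsz : size (pre ++ (y1, 0) :: r) = p by rewrite size_cat /=.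
have [_ H2] := H _ x (size pre) Hsz ltac:(lia).
have := lin0 H2; by rewrite nth_cat_mid set_nth_cat.
Qed.

Lemma plug q Q lQ kQ lP (F : G -> G) (aF : nat) sin xin csin cxin :
  has_bidegree q Q lQ kQ -> size sin = q -> size csin = q -> homs csin sin ->
  hom_in cxin xin -> F 0 = 0 ->
  (forall c : bool, hom_in c (Q sin xin) -> good lP (Posz (aF + c)%N) (F (Q sin xin))) ->
  good (lP + lQ) (Posz (aF + (cnt csin + cxin))%N) (F (Q sin xin)).
Proof.
move=> HQ Hs Hcs Hh Hx F0 HF.
have [g1 [g2 g3]] := bideg_good HQ Hs Hcs Hh Hx.
set aG := (cnt csin + cxin)%N in g1 g2 g3 *.
have [E1|N1] := eqVneq (Posz aG) (lQ + 1).
  have := good_shift lQ (HF true (g1 E1)).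
  by have -> : Posz (aF + true)%N + lQ = Posz (aF + aG)%N by rewrite /= in E1 *; lia.
have [E2|N2] := eqVneq (Posz aG) lQ.
  have := good_shift lQ (HF false (g2 E2)).
  by have -> : Posz (aF + false)%N + lQ = Posz (aF + aG)%N by rewrite /= in E2 *; lia.
rewrite g3; [by rewrite F0; exact: good0 | exact/eqP | exact/eqP].
Qed.


Lemma comp_good p q P Q lP kP lQ kQ s x cs cx :
  multilinear p P -> has_bidegree p P lP kP -> has_bidegree q Q lQ kQ ->
  size s = (p + q)%N -> size cs = (p + q)%N -> homs cs s -> hom_in cx x ->
  good (lP + lQ) (Posz (cnt cs + cx)%N) (Defs.comp p q P Q s x).
Proof.
move=> HmlP HP HQ Hs Hcs Hh Hx.
rewrite /Defs.comp; apply: goodD.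
- apply: good_sum_ord => k; apply: good_sum_seq => m Hm; apply: goodZ.
  have [Hsm Hcm] := shuffles_prop Hm.
  have Hk := ltn_ord k.
  set n := (k + q)%N.
  have Hn : (n < size s)%N by rewrite Hs /n; lia.
  have Hnc : (n < size cs)%N by rewrite Hcs /n; lia.
  set U := take n s; set CU := take n cs.
  set X := nth (0,0) s n; set CX := nth (true,true) cs n.
  set r := drop n.+1 s; set cr := drop n.+1 cs.
  have sU : size U = n by rewrite size_take Hn.
  have sCU : size CU = n by rewrite size_take Hnc.
  have sr : size r = (p - k).-1 by rewrite size_drop Hs /n; lia.
  have hU : homs CU U by apply: homs_take.
  have hr : homs cr r by apply: homs_drop.
  have [hX1 hX2] := homs_nth Hh Hn.
  have Ecs := cnt_split Hnc.
  have EcU : cnt CU = (cnt (mask m CU) + cnt (mask (map negb m) CU))%N.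
    by apply: cnt_mask; rewrite sCU Hsm.
  have smU : size (mask m U) = k by rewrite size_mask // sU Hsm.
  have snU : size (mask (map negb m) U) = q.
    by rewrite size_mask ?size_map ?sU ?Hsm // count_negb Hsm Hcm; lia.
  have smCU : size (mask m CU) = k by rewrite size_mask // sCU Hsm.
  have snCU : size (mask (map negb m) CU) = q.
    by rewrite size_mask ?size_map ?sCU ?Hsm // count_negb Hsm Hcm; lia.
  rewrite /=; apply: goodD.
  + have E : (cnt cs + cx = (cnt (mask m CU) + CX.2 + cnt cr + cx)
                 + (cnt (mask (map negb m) CU) + CX.1))%N.
      by rewrite Ecs -/CU -/CX -/cr EcU; lia.
    rewrite E; apply: (@plug q Q lQ kQ lP (fun u => P (mask m U ++ (u, X.2) :: r) x))
      => //; first exact: homs_mask.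
    * apply: (@ml_zero1 p P (mask m U) r X.2 x HmlP); rewrite smU sr; lia.
    * move=> c Hc.
      have -> : ((cnt (mask m CU) + CX.2 + cnt cr + cx) + c
                  = cnt (mask m CU ++ (c, CX.2) :: cr) + cx)%N.
        by rewrite cnt_cat cnt_cons /=; lia.
      apply: (bideg_good HP) => //.
      - by rewrite size_cat smU /= sr; lia.
      - by rewrite size_cat smCU /= size_drop Hcs /n; lia.
      - by apply: homs_cat; [apply: homs_mask | split; [|split]].
  + have E : (cnt cs + cx = (cnt (mask m CU) + CX.1 + cnt cr + cx)
                 + (cnt (mask (map negb m) CU) + CX.2))%N.
      by rewrite Ecs -/CU -/CX -/cr EcU; lia.
    rewrite E; apply: (@plug q Q lQ kQ lP (fun u => P (mask m U ++ (X.1, u) :: r) x))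
      => //; first exact: homs_mask.
    * apply: (@ml_zero2 p P (mask m U) r X.1 x HmlP); rewrite smU sr; lia.
    * move=> c Hc.
      have -> : ((cnt (mask m CU) + CX.1 + cnt cr + cx) + c
                  = cnt (mask m CU ++ (CX.1, c) :: cr) + cx)%N.
        by rewrite cnt_cat cnt_cons /=; lia.
      apply: (bideg_good HP) => //.
      - by rewrite size_cat smU /= sr; lia.
      - by rewrite size_cat smCU /= size_drop Hcs /n; lia.
      - by apply: homs_cat; [apply: homs_mask | split; [|split]].
- apply: good_sum_seq => m Hm; apply: goodZ.
  have [Hsm Hcm] := shuffles_prop Hm.
  have sm : size (mask m s) = p by rewrite size_mask // Hsm Hs.
  have sn : size (mask (map negb m) s) = q.
    by rewrite size_mask ?size_map ?Hsm ?Hs // count_negb Hsm Hcm; lia.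
  have scm : size (mask m cs) = p by rewrite size_mask // Hsm Hcs.
  have scn : size (mask (map negb m) cs) = q.
    by rewrite size_mask ?size_map ?Hsm ?Hcs // count_negb Hsm Hcm; lia.
  have E : (cnt cs + cx = cnt (mask m cs) + (cnt (mask (map negb m) cs) + cx))%N.
    by rewrite (@cnt_mask m cs) ?Hsm ?Hcs //; lia.
  rewrite E; apply: (@plug q Q lQ kQ lP (fun u => P (mask m s) u)) => //.
  + exact: homs_mask.
  + exact: (lin0 (proj1 HmlP _ sm)).
  + move=> c Hc; apply: (bideg_good HP) => //; exact: homs_mask.
Qed.

End Helpers.

Theorem lemma3p5 (K : fieldType) (V1 V2 : lmodType K)
  (char0 : [pchar K] =i pred0)
  (p q : nat) (f g : cochain V1 V2) (lf kf lg kg : int) :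
  is_LTS_cochain p f -> is_LTS_cochain q g ->
  has_bidegree p f lf kf -> has_bidegree q g lg kg ->
  has_bidegree (p + q) (bracket p q f g) (lf + lg) (kf + kg).
Proof.
move=> [Hmf _] [Hmg _] Hf Hg.
split.
  case: Hf => E1 _; case: Hg => E2 _.
  have -> : lf + lg + (kf + kg) = (lf + kf) + (lg + kg) by rewrite addrACA.
  by rewrite E1 E2 mulnDr PoszD.
move=> s x cs cx Hs Hcs Hi Hx a.
have Hh : homs cs s by apply: homs_nthP; rewrite ?Hs.
have G1 := comp_good Hmf Hf Hg Hs Hcs Hh Hx.
have Hs' : size s = (q + p)%N by rewrite addnC.
have Hcs' : size cs = (q + p)%N by rewrite addnC.
have G2 := comp_good Hmg Hg Hf Hs' Hcs' Hh Hx.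
rewrite addrC in G2.
have := goodD G1 (goodN (goodZ ((-1) ^+ (p * q)) G2)).
by move=> [h1 [h2 h3]]; split; [|split].
Qed.
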